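(* For every non-trivial finite Abelian group $(A,+)$ we have $n(A) \le 8|A|$.
   Context: For an integer $n\ge 1$, $\overleftrightarrow{K}_n$ denotes the complete digraph on $n$ vertices whose arc set consists of all ordered pairs $(x,y)$ of distinct vertices. For a set $A$, an $A$-arc-labelling of $\overleftrightarrow{K}_n$ is a function $w$ from the arc set of $\overleftrightarrow{K}_n$ to $A$. If $(A,+)$ is an Abelian group, $w$ is called zero-sum-free if there is no directed cycle (including directed cycles of length two, i.e. digons $x\to y\to x$) for which the sum of the arc-labels is $0$. For a non-trivial finite Abelian group $A$, $n(A)\ge 2$ is the smallest integer such that $\overleftrightarrow{K}_{n(A)}$ has no zero-sum-free $A$-arc-labelling, i.e. for every $A$-arc-labelling of $\overleftrightarrow{K}_{n(A)}$ there is a directed cycle whose arc-labels sum to zero. *)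

(* Defs.v *)
From mathcomp Require Import all_boot all_algebra.
Set Implicit Arguments. Unset Strict Implicit. Unset Printing Implicit Defensive.
Import GRing.Theory.
Local Open Scope ring_scope.

(* An A-arc-labelling of the complete digraph on vertex set 'I_n is modelled
   as w : 'I_n -> 'I_n -> A; w x y is the label of arc (x,y) (x <> y).
   Values w x x are never used. *)

Definition is_dcycle (n : nat) (s : seq 'I_n) : bool :=
  uniq s && (2 <= size s)%N.

Definition cycle_sum (A : zmodType) (n : nat) (w : 'I_n -> 'I_n -> A)
  (s : seq 'I_n) : A :=
  \sum_(p <- zip s (rot 1 s)) w p.1 p.2.

Definition zero_sum_free (A : zmodType) (n : nat) (w : 'I_n -> 'I_n -> A) : Prop :=
  forall s : seq 'I_n, is_dcycle s -> cycle_sum w s != 0.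

Definition no_zsf_labelling (A : zmodType) (n : nat) : Prop :=
  forall w : 'I_n -> 'I_n -> A, ~ zero_sum_free w.

(* Main.v *)
Require Import Defs.
From mathcomp Require Import all_boot all_algebra.
From mathcomp Require Import zify.
Set Implicit Arguments. Unset Strict Implicit. Unset Printing Implicit Defensive.
Import GRing.Theory.

Section Aux.
Variable A : finZmodType.
Local Open Scope ring_scope.

Definition subgrp (H : {set A}) : Prop :=
  0 \in H /\ forall x y, x \in H -> y \in H -> x - y \in H.

Lemma subgrpN H x : subgrp H -> x \in H -> - x \in H.
Proof. by case=> H0 HB Hx; rewrite -sub0r HB. Qed.

Lemma subgrpD H x y : subgrp H -> x \in H -> y \in H -> x + y \in H.
Proof. move=> sH Hx Hy; rewrite -(opprK y); case: (sH) => _ ->//. exact: subgrpN. Qed.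

Definition tr (T : {set A}) (c : A) : {set A} := [set t + c | t in T].

Lemma mem_tr T c x : (x \in tr T c) = (x - c \in T).
Proof.
apply/imsetP/idP => [[t Ht ->]|Hx]; first by rewrite addrK.
by exists (x - c) => //; rewrite subrK.
Qed.

Lemma card_tr T c : #|tr T c| = #|T|.
Proof. by rewrite card_imset // => x y /addIr. Qed.

Lemma tr_tr T a b : tr (tr T a) b = tr T (a + b).
Proof. by apply/setP=> x; rewrite !mem_tr opprD addrA [x - b - a]addrAC. Qed.

Lemma tr0 T : tr T 0 = T.
Proof. by apply/setP=> x; rewrite mem_tr subr0. Qed.

Lemma tr_shift T c1 c2 : tr T c1 = tr T c2 -> tr T (c2 - c1) = T.
Proof. by move=> e; rewrite -tr_tr -e tr_tr subrr tr0. Qed.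

Definition stab (H T : {set A}) := [set h in H | tr T h == T].

Lemma stab_subgrp H T : subgrp H -> subgrp (stab H T).
Proof.
move=> sH; split; first by rewrite inE tr0 eqxx andbT; case: sH.
move=> x y; rewrite !inE => /andP[Hx /eqP ex] /andP[Hy /eqP ey].
rewrite (proj2 sH) //=; apply/eqP.
have eN : tr T (- y) = T by rewrite -{1}ey tr_tr subrr tr0.
by rewrite -tr_tr ex eN.
Qed.

Lemma half_card G G' h0 : subgrp G -> subgrp G' -> G' \subset G ->
  h0 \in G -> h0 \notin G' -> (2 * #|G'| <= #|G|)%N.
Proof.
move=> sG sG' sub Hh0 Nh0.
have disj : G' :&: tr G' h0 = set0.
  apply/setP=> x; rewrite !inE mem_tr; apply/negP => /andP[x1 x2].
  have := (proj2 sG') _ _ x1 x2; rewrite opprB addrC subrK.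
  by rewrite (negbTE Nh0).
have subU : G' :|: tr G' h0 \subset G.
  apply/subsetP=> x; rewrite inE mem_tr => /orP[x1|x2].
    exact: (subsetP sub).
  by rewrite -(subrK h0 x); apply: subgrpD => //; apply: (subsetP sub).
have := subset_leq_card subU.
by rewrite cardsU disj cards0 subn0 card_tr mul2n addnn.
Qed.

Fixpoint psum n (w : 'I_n -> 'I_n -> A) (x : 'I_n) (q : seq 'I_n) : A :=
  if q is y :: q' then w x y + psum w y q' else 0.

Lemma psum_rcons n (w : 'I_n -> 'I_n -> A) x q z :
  psum w x (rcons q z) = psum w x q + w (last x q) z.
Proof.
elim: q x => [|y q IH] x /=; first by rewrite addr0 add0r.
by rewrite IH addrA.
Qed.

Lemma zip_sum n (w : 'I_n -> 'I_n -> A) x q c :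
  \sum_(p <- zip (x :: q) (rcons q c)) w p.1 p.2 = psum w x q + w (last x q) c.
Proof.
elim: q x => [|y q IH] x /=; first by rewrite big_seq1 add0r.
by rewrite big_cons /= IH addrA.
Qed.

Lemma cycle_sumE n (w : 'I_n -> 'I_n -> A) x q :
  cycle_sum w (x :: q) = psum w x q + w (last x q) x.
Proof. by rewrite /cycle_sum rot1_cons zip_sum. Qed.

Lemma psum_shift n (w : 'I_n -> 'I_n -> A) (f : 'I_n -> A) x q :
  psum (fun u v => w u v + f u - f v) x q = psum w x q + f x - f (last x q).
Proof.
elim: q x => [|y q IH] x /=; first by rewrite add0r subrr.
rewrite IH !addrA; congr (_ - _).
rewrite -[_ + f y]addrA [psum _ _ _ + _]addrC addrA subrK.
by rewrite addrAC.
Qed.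

Lemma cycle_sum_shift n (w : 'I_n -> 'I_n -> A) (f : 'I_n -> A) x q :
  cycle_sum (fun u v => w u v + f u - f v) (x :: q) = cycle_sum w (x :: q).
Proof.
rewrite !cycle_sumE psum_shift.
by rewrite [w _ _ + f _]addrC addrA addrA subrK addrAC addrK.
Qed.

Definition zsf_on n (w : 'I_n -> 'I_n -> A) (R : {set 'I_n}) : Prop :=
  forall s, is_dcycle s -> {subset s <= R} -> cycle_sum w s != 0.

Definition labels_in n (w : 'I_n -> 'I_n -> A) (R : {set 'I_n}) (H : {set A}) :=
  forall x y, x \in R -> y \in R -> x != y -> w x y \in H.


Lemma arith1 r x t t' h : r = (x + 2)%N -> (t < t')%N -> (x + 2*t' <= 4*h - 4)%N ->
  (r + 2*t <= 4*h - 4)%N.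
Proof. lia. Qed.
Lemma arith2 r t h h' : (2*h' <= h)%N -> (0 < h')%N -> (t < h)%N -> (r <= 4*h' - 3)%N ->
  (r + 2*t <= 4*h - 4)%N.
Proof. lia. Qed.
Lemma arith3 h h' : (2*h' <= h)%N -> (0 < h')%N -> (h' < h)%N.
Proof. lia. Qed.

Lemma step n (H : {set A}) (w : 'I_n -> 'I_n -> A) (R0 : {set 'I_n}) (x0 : 'I_n)
  (IH : forall (H' : {set A}) (w' : 'I_n -> 'I_n -> A) (R' : {set 'I_n}),
     (#|H'| < #|H|)%N -> subgrp H' -> labels_in w' R' H' -> zsf_on w' R' ->
     (#|R'| <= 4 * #|H'| - 3)%N)
  (sH : subgrp H) (lab : labels_in w R0 H) (zsf : zsf_on w R0) (x0R : x0 \in R0) :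
  forall m (U R : {set 'I_n}) (a : 'I_n) (T : {set A}), #|R| = m ->
  (forall u, u \in U -> u \notin R) -> {subset U <= R0} -> {subset R <= R0} ->
  x0 \in U -> a \in U ->
  T \subset H -> (0 < #|T|)%N -> (#|T| < #|H|)%N ->
  (forall t, t \in T -> exists q, [/\ uniq (x0 :: q), last x0 q = a,
       {subset x0 :: q <= U} & psum w x0 q = t]) ->
  (#|R| + 2 * #|T| <= 4 * #|H| - 4)%N.
Proof.
elim/ltn_ind => m IHm U R a T eR disj UR RR x0U aU TH T0 TltH Tw.
have aR0 : a \in R0 := UR _ aU.
case: (boolP [exists y, exists z, [&& y \in R, z \in R, y != z &
          tr T (w a z) != tr T (w a y + w y z)]]).
- case/existsP => y /existsP [z /and4P [yR zR yz neq]].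
  set T' := tr T (w a z) :|: tr T (w a y + w y z).
  have ay : a != y by apply/eqP => e; move: (disj _ aU); rewrite e yR.
  have az : a != z by apply/eqP => e; move: (disj _ aU); rewrite e zR.
  have x0z : z != x0 by apply/eqP => e; move: (disj _ x0U); rewrite -e zR.
  have yR0 := RR _ yR; have zR0 := RR _ zR.
  have HT' : T' \subset H.
    apply/subsetP => t; rewrite inE !mem_tr => /orP [] h.
      rewrite -(subrK (w a z) t); apply: subgrpD => //; first exact: (subsetP TH).
      exact: lab.
    rewrite -(subrK (w a y + w y z) t); apply: subgrpD => //; first exact: (subsetP TH).
    apply: subgrpD => //; apply: lab => //; by rewrite eq_sym.
  have gt : (#|T| < #|T'|)%N.
    rewrite -(card_tr T (w a z)); apply: proper_card; apply: properUl.
    apply: contra neq => sub; rewrite eq_sym eqEcard sub !card_tr leqnn //.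
  have Tw' : forall t, t \in T' -> exists q, [/\ uniq (x0 :: q), last x0 q = z,
       {subset x0 :: q <= U :|: [set y; z]} & psum w x0 q = t].
    move=> t; rewrite inE !mem_tr => /orP [] /Tw [q [uq lq sq pq]].
    + exists (rcons q z); split.
      * rewrite -rcons_cons rcons_uniq uq andbT; apply/negP => /sq zU.
        by move: (disj _ zU); rewrite zR.
      * by rewrite last_rcons.
      * move=> u; rewrite -rcons_cons mem_rcons in_cons => /orP [/eqP -> | /sq uU];
          by rewrite !inE ?eqxx ?orbT ?uU.
      * by rewrite psum_rcons lq pq subrK.
    + exists (rcons (rcons q y) z); split.
      * rewrite -!rcons_cons !rcons_uniq uq andbT mem_rcons inE negb_or eq_sym yz /=.
        apply/andP; split; apply/negP => /sq uU.
          by move: (disj _ uU); rewrite zR.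
        by move: (disj _ uU); rewrite yR.
      * by rewrite last_rcons.
      * move=> u; rewrite -!rcons_cons mem_rcons in_cons mem_rcons in_cons => /orP [/eqP -> | /orP [/eqP -> | /sq uU]];
          by rewrite !inE ?eqxx ?orbT ?uU.
      * by rewrite !psum_rcons last_rcons lq pq -addrA subrK.
  have TltH' : (#|T'| < #|H|)%N.
    have vH : - w z x0 \in H by apply: subgrpN => //; apply: lab.
    have vT : - w z x0 \notin T'.
      apply/negP => /Tw' [q [uq lq sq pq]].
      have dc : is_dcycle (x0 :: q).
        rewrite /is_dcycle uq /=; case: q lq {uq sq pq} => [/= e|//].
        by move: x0z; rewrite e eqxx.
      have sub : {subset x0 :: q <= R0}.
        by move=> u /sq; rewrite !inE => /orP [/UR //|/orP [] /eqP -> //].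
      by have := zsf _ dc sub; rewrite cycle_sumE lq pq addNr eqxx.
    rewrite (cardsD1 (- w z x0) H) vH add1n ltnS; apply: subset_leq_card.
    apply/subsetP => t tT; rewrite !inE (subsetP HT' _ tT) andbT.
    by apply: contraNneq vT => <-.
  have := IHm #|R :\ y :\ z| _ (U :|: [set y; z]) (R :\ y :\ z) z T' erefl.
  have eRR : #|R| = (#|R :\ y :\ z| + 2)%N.
    rewrite (cardsD1 y R) yR (cardsD1 z (R :\ y)) !inE zR eq_sym yz /=.
    by rewrite /= add1n add1n addn2.
  move=> /(_ _ _ _ _ _ _ _ _ _ Tw') h.
  suff : (#|R :\ y :\ z| + 2 * #|T'| <= 4 * #|H| - 4)%N by apply: arith1.
  apply: h => //.
  + by rewrite -eR eRR addn2 ltnS leqnSn.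
  + move=> u; rewrite !inE => /orP [uU|/orP [] /eqP ->]; rewrite ?eqxx ?andbF //.
    by rewrite (negbTE (disj _ uU)) !andbF.
  + move=> u; rewrite !inE => /orP [/UR //|/orP [] /eqP ->] //.
  + by move=> u; rewrite !inE => /andP [_ /andP [_ /RR]].
  + by rewrite !inE x0U.
  + by rewrite !inE eqxx !orbT.
  + exact: leq_ltn_trans (leq0n _) gt.
- rewrite negb_exists => /forallP st.
  have st' : forall y z, y \in R -> z \in R -> y != z ->
      tr T (w a z) = tr T (w a y + w y z).
    move=> y z yR zR yz; move: (st y); rewrite negb_exists => /forallP /(_ z).
    by rewrite yR zR yz /= negbK => /eqP.
  pose H' := stab H T.
  have sH' : subgrp H' := stab_subgrp T sH.
  have nsub : ~~ (H \subset T).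
    by apply/negP => /subset_leq_card; rewrite leqNgt TltH.
  case/subsetPn: nsub => x xH xT.
  have [t0 t0T] : exists t0, t0 \in T.
    by move: T0; rewrite card_gt0 => /set0Pn.
  have h0H : x - t0 \in H by apply: (proj2 sH) => //; apply: (subsetP TH).
  have h0n : x - t0 \notin H'.
    rewrite inE negb_and h0H /=; apply: contra xT => /eqP <-.
    by rewrite mem_tr opprB addrC subrK.
  have H'H : H' \subset H by apply/subsetP => h; rewrite inE => /andP [].
  have hc := half_card sH sH' H'H h0H h0n.
  have H'pos : (0 < #|H'|)%N by rewrite card_gt0; apply/set0Pn; exists 0; exact: (proj1 sH').
  suff hR : (#|R| <= 4 * #|H'| - 3)%N by apply: arith2 hc H'pos TltH hR.
  apply: (IH H' (fun u v => w u v + w a u - w a v) R) => //.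
  + exact: arith3.
  + move=> y z yR zR yz /=; rewrite inE; apply/andP; split.
      have yR0 := RR _ yR; have zR0 := RR _ zR.
      have ay : a != y by apply/eqP => e; move: (disj _ aU); rewrite e yR.
      have az : a != z by apply/eqP => e; move: (disj _ aU); rewrite e zR.
      by apply: (proj2 sH); [apply: subgrpD => //|]; apply: lab.
    by move: (st' y z yR zR yz) => /tr_shift; rewrite [w a y + _]addrC => ->.
  + case=> [|u q] ds sR; first by [].
    rewrite cycle_sum_shift; apply: zsf => // v /sR; exact: RR.
Qed.

Lemma arith4 h r : (1 < h)%N -> (r.-1 + 2 * 1 <= 4 * h - 4)%N -> (r <= 4 * h - 3)%N.
Proof. lia. Qed.
Lemma arith5 h r : (0 < h)%N -> (r <= 1)%N -> (r <= 4 * h - 3)%N.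
Proof. lia. Qed.

Lemma bound n : forall k (H : {set A}) (w : 'I_n -> 'I_n -> A) (R0 : {set 'I_n}),
  #|H| = k -> subgrp H -> labels_in w R0 H -> zsf_on w R0 ->
  (#|R0| <= 4 * #|H| - 3)%N.
Proof.
elim/ltn_ind => k IHk H w R0 eH sH lab zsf.
have H0 : 0 \in H := proj1 sH.
have Hpos : (0 < #|H|)%N by rewrite card_gt0; apply/set0Pn; exists 0.
case: (leqP #|H| 1) => Hle.
  apply: arith5 => //.
  rewrite leqNgt; apply/negP => /card_gt1P [x [y [xR yR xy]]].
  have Hs : forall v, v \in H -> v = 0.
    move=> v vH; apply/eqP; case: (boolP (v == 0)) => // nv; exfalso.
    have : (1 < #|H|)%N by apply/card_gt1P; exists 0, v; split => //; rewrite eq_sym.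
    by rewrite ltnNge Hle.
  have dc : is_dcycle [:: x; y] by rewrite /is_dcycle /= inE xy.
  have sub : {subset [:: x; y] <= R0}.
    by move=> u; rewrite !inE => /orP [] /eqP ->.
  have := zsf _ dc sub; rewrite cycle_sumE /= (Hs _ (lab _ _ xR yR xy)).
  by rewrite (Hs _ (lab _ _ yR xR _)) ?addr0 ?eqxx // eq_sym.
case: (boolP (R0 == set0)) => [/eqP -> | /set0Pn [x0 x0R]]; first by rewrite cards0.
have IH : forall (H' : {set A}) (w' : 'I_n -> 'I_n -> A) (R' : {set 'I_n}),
     (#|H'| < #|H|)%N -> subgrp H' -> labels_in w' R' H' -> zsf_on w' R' ->
     (#|R'| <= 4 * #|H'| - 3)%N.
  by move=> H' w' R' lt; apply: (IHk #|H'|) => //; rewrite -eH.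
have := @step n H w R0 x0 IH sH lab zsf x0R #|R0 :\ x0| [set x0] (R0 :\ x0) x0 [set 0] erefl.
rewrite cards1 => h.
apply: (arith4 Hle); rewrite (cardsD1 x0 R0) x0R add1n /=.
apply: h.
- by move=> u; rewrite !inE => /eqP ->; rewrite eqxx.
- by move=> u; rewrite inE => /eqP ->.
- by move=> u; rewrite inE => /andP [].
- by rewrite inE.
- by rewrite inE.
- by rewrite sub1set.
- by [].
- exact: Hle.
- move=> t; rewrite inE => /eqP ->; exists [::]; split => //.
  by move=> u; rewrite inE => /eqP ->; rewrite inE.
Qed.

End Aux.

Lemma arith6 a : (1 < a)%N -> (4 * a - 2 <= 4 * a - 3)%N -> False.
Proof. lia. Qed.

Theorem theorem1 (A : finZmodType) (hA : (1 < #|A|)%N) :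
  exists n : nat, [/\ (2 <= n)%N, (n <= 8 * #|A|)%N & no_zsf_labelling A n].
Proof.
exists (4 * #|A| - 2)%N; split; [lia | lia |].
move=> w zsf.
have sT : subgrp [set: A] by split => *; rewrite inE.
apply: (arith6 hA).
have := @bound A (4 * #|A| - 2) #|[set: A]| [set: A] w [set: 'I_(4 * #|A| - 2)] erefl sT.
rewrite !cardsT card_ord => h.
apply: h.
- by move=> *; rewrite inE.
- by move=> s ds _; apply: zsf.
Qed.
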